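(* Let $n\ge3$ and let $A$ be a real symmetric diagonally dominant $n\times n$ matrix all of whose entries are positive. Let $m$ be the largest off-diagonal entry of $A$, $\ell$ the smallest entry of $A$, and $\delta=\max_i\Delta_i(A)$. Then the condition number $\kappa_\infty(A)=\|A\|_\infty\|A^{-1}\|_\infty$ satisfies $$\kappa_\infty(A)\le\frac{(2m(n-1)+\delta)(3n-4)}{2\ell(n-2)(n-1)}.$$
   Context: For a real $n\times n$ matrix $A$, $\Delta_i(A)=|A_{ii}|-\sum_{j\ne i}|A_{ij}|$; $A$ is diagonally dominant if $\Delta_i(A)\ge0$ for all $i$. $\|A\|_\infty$ is the maximum absolute row sum of $A$. *)

(* Defs.v *)
From HB Require Import structures.
From mathcomp Require Import all_boot all_order all_algebra.
Set Implicit Arguments. Unset Strict Implicit. Unset Printing Implicit Defensive.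
Import Order.TTheory GRing.Theory Num.Theory.
Local Open Scope ring_scope.

Definition Delta (R : realFieldType) (n : nat) (A : 'M[R]_n) (i : 'I_n) : R :=
  `|A i i| - \sum_(j < n | j != i) `|A i j|.

Definition diag_dominant (R : realFieldType) (n : nat) (A : 'M[R]_n) : Prop :=
  forall i, 0 <= Delta A i.

Definition inf_norm (R : realFieldType) (m n : nat) (A : 'M[R]_(m, n)) : R :=
  \big[Num.max/0]_(i < m) \sum_(j < n) `|A i j|.

Definition cond_inf (R : realFieldType) (n : nat) (A : 'M[R]_n) : R :=
  inf_norm A * inf_norm (invmx A).

(* largest off-diagonal entry (default 0 is harmless: entries are positive) *)
Definition max_offdiag (R : realFieldType) (n : nat) (A : 'M[R]_n) : R :=
  \big[Num.max/0]_(i < n) \big[Num.max/0]_(j < n | j != i) A i j.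

(* largest entry, used only as a neutral default for the minimum *)
Definition max_entry (R : realFieldType) (n : nat) (A : 'M[R]_n) : R :=
  \big[Num.max/0]_(i < n) \big[Num.max/0]_(j < n) A i j.

(* smallest entry of A (for n > 0 the default max_entry A is neutral) *)
Definition min_entry (R : realFieldType) (n : nat) (A : 'M[R]_n) : R :=
  \big[Num.min/max_entry A]_(i < n) \big[Num.min/max_entry A]_(j < n) A i j.

(* delta = max_i Delta_i(A) (default 0 harmless under diagonal dominance) *)
Definition max_Delta (R : realFieldType) (n : nat) (A : 'M[R]_n) : R :=
  \big[Num.max/0]_(i < n) Delta A i.

(* Main.v *)
Require Import Defs.
From HB Require Import structures.
From mathcomp Require Import all_boot all_order all_algebra.
From mathcomp Require Import ring lra.
Import Order.TTheory GRing.Theory Num.Theory.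
Local Open Scope ring_scope.

Definition wfun {R : realFieldType} (th t : R) : R :=
  if th < t then 1 else if t < - th then -1 else 0.

Lemma wfun_x (R : realFieldType) (th t : R) : 0 <= th -> 0 <= wfun th t * t.
Proof.
move=> h0; rewrite /wfun; case: (ltrP th t) => h1; first by rewrite mul1r; lra.
case: (ltrP t (- th)) => h2; last by rewrite mul0r.
by rewrite mulN1r; lra.
Qed.

Lemma wfun_pair (R : realFieldType) (th a b : R) : 0 <= th ->
  0 <= (wfun th a + wfun th b) * (a + b).
Proof.
move=> h0; rewrite /wfun.
case: (ltrP th a) => h1; case: (ltrP th b) => h2;
try case: (ltrP a (- th)) => h3; try case: (ltrP b (- th)) => h4;
rewrite ?addrN ?mul0r ?add0r ?addr0 ?mul1r ?mulN1r //; lra.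
Qed.

Lemma per_elem (R : realFieldType) (N c M S tau th t : R) :
  (N - 2) * tau = c * M + S -> 0 <= th -> tau <= th -> (0 < th -> th = tau) -> 0 < N - 2 ->
  (N - 2) * ((if th < t then t else 0) - (if th < t then 1 else 0) * tau)
  + 2 * S * (if th < t then 1 else 0)
  + (N - 2) * ((if t < 0 then - t else 0) - (if t < 0 then 1 else 0) * tau)
   <= wfun th t * ((N - 2) * t + S) - c * M * `|wfun th t|.
Proof.
move=> htau th0 thtau thpos N2; rewrite /wfun.
case: (ltrP th t) => h1.
  have h0 : (t < 0) = false by apply/negbTE; rewrite -leNgt; lra.
  rewrite h0 /= normr1; lra.
case: (ltrP t (- th)) => h2.
  have h0 : (t < 0) = true by apply/idP; lra.
  rewrite h0 /= normrN normr1; lra.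
case: (ltrP t 0) => h3 /=; rewrite normr0.
  have e : th = tau by apply: thpos; lra.
  nra.
lra.
Qed.

Lemma elem_XS (R : realFieldType) (th t : R) : 0 <= th ->
  (if th < t then t else 0) - t <= (if t < 0 then - t else 0).
Proof. by move=> h; case: (ltrP th t) => h1; case: (ltrP t 0) => h2; lra. Qed.

Lemma elem_NQ (R : realFieldType) (t M : R) : - M <= t ->
  (if t < 0 then - t else 0) <= (if t < 0 then 1 else 0) * M.
Proof. by move=> h; case: (ltrP t 0) => h2; rewrite ?mul1r ?mul0r; lra. Qed.

Lemma elem_Xp (R : realFieldType) (th tau t : R) : tau <= th ->
  0 <= (if th < t then t else 0) - (if th < t then 1 else 0) * tau.
Proof. by move=> h; case: (ltrP th t) => h1; rewrite ?mul1r ?mul0r; lra. Qed.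

Lemma elem_X0 (R : realFieldType) (th t : R) : 0 <= th -> 0 <= if th < t then t else 0.
Proof. by move=> h; case: (ltrP th t) => h1; lra. Qed.

Lemma elem_01 (R : realFieldType) (b : bool) : 0 <= (if b then 1 else 0 : R).
Proof. by case: b. Qed.

Lemma elem_pQ (R : realFieldType) (th t : R) : 0 <= th ->
  (if th < t then 1 else 0) + (if t < 0 then 1 else 0) <= 1 :> R.
Proof. by move=> h; case: (ltrP th t) => h1; case: (ltrP t 0) => h2; lra. Qed.
Lemma arith_core (R : realFieldType) (N M tau S X Ns p Q c : R) :
  3 <= N -> 0 < M -> c * (3 * N - 4) = 2 * (N - 2) * (N - 1) ->
  (N - 2) * tau = c * M + S -> S < (c - (N - 2)) * M ->
  X - S <= Ns -> Ns <= Q * M -> M - tau <= X - p * tau ->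
  1 <= p -> 1 <= Q -> p + Q <= N ->
  0 <= (N - 2) * (X - p * tau) + 2 * S * p + (N - 2) * (Ns - Q * tau).
Proof.
move=> N3 M0 hc ht hS hN1 hN2 hX p1 Q1 pQ.
have hS' : S = (N - 2) * tau - c * M by lra.
have K0 : 0 < 3 * N - 4 by lra.
have N2 : 0 < N - 2 by lra.
set T := (N - 2) * (2 * M + (3 * p - Q - N) * tau) + (N - 2 - 2 * p) * c * M.
have GT : T <= (N - 2) * (X - p * tau) + 2 * S * p + (N - 2) * (Ns - Q * tau).
  have -> : (N - 2) * (X - p * tau) + 2 * S * p + (N - 2) * (Ns - Q * tau) =
     T + (N - 2) * (2 * ((X - p * tau) - (M - tau)) + (Ns - (X - S))).
    by rewrite /T hS'; ring.
  have : 0 <= (N - 2) * (2 * ((X - p * tau) - (M - tau)) + (Ns - (X - S))).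
    by apply: mulr_ge0; lra.
  lra.
apply: le_trans GT.
have h1 : (1 + c - Q) * M <= (N - 1 - p) * tau.
  have : X - S <= Q * M by lra.
  rewrite hS'; nra.
have h2 : (3 * N - 4) * tau < N * M.
  have h2a : (N - 2) * tau < (2 * c - N + 2) * M by nra.
  have h2b : (N - 2) * ((3 * N - 4) * tau) < (N - 2) * (N * M).
    have -> : (N - 2) * ((3 * N - 4) * tau) = (3 * N - 4) * ((N - 2) * tau) by ring.
    have : (3 * N - 4) * ((N - 2) * tau) < (3 * N - 4) * ((2 * c - N + 2) * M).
      by rewrite ltr_pM2l.
    have -> : (3 * N - 4) * ((2 * c - N + 2) * M) = (N - 2) * (N * M).
      have -> : (3 * N - 4) * ((2 * c - N + 2) * M) = (2 * (c * (3 * N - 4)) - (N - 2) * (3 * N - 4)) * M by ring.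
      rewrite hc; ring.
    done.
  by rewrite ltr_pM2l in h2b.
have hp : 2 * p <= N.
  have e1 : (1 + c - N + p) * M <= (N - 1 - p) * tau by nra.
  have e2 : (3 * N - 4) * ((1 + c - N + p) * M) <= (N - 1 - p) * (N * M).
    have : (3 * N - 4) * ((1 + c - N + p) * M) <= (3 * N - 4) * ((N - 1 - p) * tau).
      by rewrite ler_pM2l.
    have : (N - 1 - p) * ((3 * N - 4) * tau) <= (N - 1 - p) * (N * M).
      by apply: ler_wpM2l; lra.
    nra.
  have e3 : (3 * N - 4) * ((1 + c - N + p) * M) = ((3 * N - 4) * (1 - N + p) + 2 * (N - 2) * (N - 1)) * M.
    have -> : (3 * N - 4) * ((1 + c - N + p) * M) = ((3 * N - 4) * (1 - N + p) + c * (3 * N - 4)) * M by ring.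
    by rewrite hc.
  rewrite e3 in e2.
  have e4 : ((3 * N - 4) * (1 - N + p) + 2 * (N - 2) * (N - 1)) <= (N - 1 - p) * N.
    have : ((3 * N - 4) * (1 - N + p) + 2 * (N - 2) * (N - 1)) * M <= ((N - 1 - p) * N) * M.
      have -> : ((N - 1 - p) * N) * M = (N - 1 - p) * (N * M) by ring.
      exact: e2.
    by rewrite ler_pM2r.
  have e5 : p * (4 * N - 4) <= 2 * N * (N - 1) by nra.
  nra.
have c_gt : (N - 2) < 2 * c.
  have : (N - 2) * (3 * N - 4) < 2 * (c * (3 * N - 4)) by rewrite hc; nra.
  have -> : 2 * (c * (3 * N - 4)) = (2 * c) * (3 * N - 4) by ring.
  by rewrite ltr_pM2r.
have c_le : c <= N - 2.
  have : c * (3 * N - 4) <= (N - 2) * (3 * N - 4) by rewrite hc; nra.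
  by rewrite ler_pM2r.
have [hcase|hcase] := lerP 0 (N + Q - 3 * p).
- have e1 : (N + Q - 3 * p) * ((3 * N - 4) * tau) <= (N + Q - 3 * p) * (N * M).
    by apply: ler_wpM2l => //; apply: ltW.
  have e2 : 0 <= (N - 2) * M * (N ^+ 2 - 4 - N * Q + p * (4 - N)).
    apply: mulr_ge0; first nra.
    nra.
  have e3 : 0 <= (3 * N - 4) * T.
    rewrite /T.
    have -> : (3 * N - 4) * ((N - 2) * (2 * M + (3 * p - Q - N) * tau) + (N - 2 - 2 * p) * c * M)
       = (N - 2) * (2 * (3 * N - 4) * M - (N + Q - 3 * p) * ((3 * N - 4) * tau)) + (N - 2 - 2 * p) * (c * (3 * N - 4)) * M by ring.
    rewrite hc.
    have : (N - 2) * ((N + Q - 3 * p) * ((3 * N - 4) * tau)) <= (N - 2) * ((N + Q - 3 * p) * (N * M)).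
      by apply: ler_wpM2l => //; lra.
    move: e2; rewrite expr2; nra.
  by move: e3; rewrite pmulr_rge0.
- have t0 : 0 <= tau.
    rewrite leNgt; apply/negP => tn.
    have : (N - 1 - p) * tau <= 0 by apply: mulr_ge0_le0; lra.
    move=> hh.
    have : 1 + c - Q <= 0.
      have : (1 + c - Q) * M <= 0 * M by lra.
      by rewrite ler_pM2r.
    lra.
  have e1 : 0 <= (N - 2) * ((3 * p - Q - N) * tau) by apply: mulr_ge0; [lra|apply: mulr_ge0=>//; lra].
  have e2 : 0 <= (N - 2 - c) * M by apply: mulr_ge0; lra.
  have e3 : -2 * c * M <= (N - 2 - 2 * p) * c * M.
    rewrite -!mulrA; apply: ler_wpM2r; first by apply: mulr_ge0; lra.
    lra.
  rewrite /T; nra.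
Qed.
Lemma row_ident (R : realFieldType) n (A : 'M[R]_n) (l : R) (x : 'I_n -> R) (i : 'I_n) :
  \sum_j (A i j - l) * (x i + x j) =
  x i * \sum_j A i j + \sum_j A i j * x j - l * (n%:R * x i + \sum_j x j).
Proof.
have -> : n%:R * x i = \sum_(j < n) x i by rewrite sumr_const card_ord mulr_natl.
rewrite mulr_sumr mulrDr !mulr_sumr -!big_split -sumrB /=.
by apply: eq_bigr => j _; ring.
Qed.

Lemma cert (R : realFieldType) n (A : 'M[R]_n) (l : R) (x w : 'I_n -> R) :
  A^T = A -> (forall i, 0 <= `|A i i| - \sum_(j < n | j != i) `|A i j|) ->
  (forall i j, 0 < A i j) -> (forall i j, l <= A i j) ->
  (forall i, 0 <= w i * x i) -> (forall i j, 0 <= (w i + w j) * (x i + x j)) ->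
  l * \sum_i w i * ((n%:R - 2) * x i + \sum_j x j) <= \sum_i w i * \sum_j A i j * x j.
Proof.
move=> sym dd pos lA wx wxx.
have Asym : forall i j, A j i = A i j.
  by move=> i j; rewrite -{1}sym mxE.
pose k i j := (A i j - l) * (w i * (x i + x j)).
pose g i j := (A i j - l) * ((w i + w j) * (x i + x j)).
have gk : \sum_i \sum_j g i j = 2 * \sum_i \sum_j k i j.
  have e : \sum_i \sum_j g i j = \sum_i \sum_j k i j + \sum_i \sum_j k j i.
    rewrite -big_split /=; apply: eq_bigr => i _; rewrite -big_split /=.
    by apply: eq_bigr => j _; rewrite /g /k Asym; ring.
  rewrite e.
  have -> : \sum_i \sum_j k j i = \sum_i \sum_j k i j by exact: exchange_big.
  ring.
have kid : forall i, \sum_j k i j =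
   w i * (x i * \sum_j A i j + \sum_j A i j * x j - l * (n%:R * x i + \sum_j x j)).
  by move=> i; rewrite -row_ident mulr_sumr; apply: eq_bigr => j _; rewrite /k; ring.
have main : \sum_i w i * \sum_j A i j * x j - l * \sum_i w i * ((n%:R - 2) * x i + \sum_j x j)
   = \sum_i ((\sum_j g i j) / 2 - w i * x i * (\sum_j A i j - 2 * l)).
  rewrite sumrB -mulr_suml gk (mulrC 2) mulfK ?pnatr_eq0 //.
  rewrite mulr_sumr -!sumrB; apply: eq_bigr => i _; rewrite kid; ring.
rewrite -subr_ge0 main; apply: sumr_ge0 => i _.
rewrite (bigD1 i) //= subr_ge0.
have h1 : 0 <= \sum_(j < n | j != i) g i j.
  apply: sumr_ge0 => j _; apply: mulr_ge0; [by rewrite subr_ge0|exact: wxx].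
have h2 : \sum_j A i j = A i i + \sum_(j < n | j != i) A i j by rewrite (bigD1 i).
have h3 : A i i - \sum_(j < n | j != i) A i j >= 0.
  have := dd i; rewrite ger0_norm; last exact: ltW.
  by rewrite (eq_bigr (fun j => A i j)) // => j _; rewrite ger0_norm // ltW.
have h4 : g i i = 4 * (A i i - l) * (w i * x i) by rewrite /g; ring.
rewrite h2 h4.
have := wx i; have := lA i i; move: h1 h3; nra.
Qed.

Lemma key (R : realFieldType) n (A : 'M[R]_n) (l : R) (x : 'I_n -> R) (k : 'I_n) (Y : R) :
  (3 <= n)%N -> A^T = A -> (forall i, 0 <= `|A i i| - \sum_(j < n | j != i) `|A i j|) ->
  (forall i j, 0 < A i j) -> (forall i j, l <= A i j) -> 0 < l ->
  (forall i, `|\sum_j A i j * x j| <= Y) -> (forall j, `|x j| <= x k) ->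
  l * ((2 * (n%:R - 2) * (n%:R - 1)) / (3 * n%:R - 4) * x k) <= Y.
Proof.
move=> n3 sym dd pos lA l0 hy hx.
set N : R := n%:R.
have N3 : 3 <= N by rewrite /N (ler_nat R 3 n).
set c : R := (2 * (N - 2) * (N - 1)) / (3 * N - 4).
have hc : c * (3 * N - 4) = 2 * (N - 2) * (N - 1).
  have K0 : 0 < 3 * N - 4 by lra.
  by rewrite /c divfK //; exact: lt0r_neq0.
have c0 : 0 < c.
  have : 0 < c * (3 * N - 4) by rewrite hc; nra.
  by rewrite pmulr_lgt0 //; lra.
set M := x k; set S := \sum_j x j.
have hxl : forall j, - M <= x j by move=> j; move: (hx j); rewrite ler_norml => /andP[].
have hxu : forall j, x j <= M by move=> j; move: (hx j); rewrite ler_norml => /andP[].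
have M0 : 0 <= M by move: (hx k); rewrite -/M => h; apply: le_trans h.
have Sge : - (N * M) <= S.
  have -> : - (N * M) = \sum_(j < n) (- M) by rewrite sumr_const card_ord -mulr_natl mulrN.
  by apply: ler_sum => j _; exact: hxl.
pose y i := \sum_j A i j * x j.
have bound : forall w : 'I_n -> R, \sum_i w i * y i <= Y * \sum_i `|w i|.
  move=> w; rewrite mulr_sumr; apply: ler_sum => i _.
  apply: le_trans (ler_norm _) _; rewrite normrM mulrC.
  by apply: ler_wpM2r => //; exact: hy.
pose w1 i : R := (i == k)%:R.
have c1 : l * ((N - 2) * M + S) <= Y.
  have := @cert R n A l x w1 sym dd pos lA.
  have e1 : \sum_i w1 i * ((N - 2) * x i + S) = (N - 2) * M + S.
    rewrite (bigD1 k) //= big1 => [|i /negbTE h]; first by rewrite /w1 eqxx mul1r addr0.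
    by rewrite /w1 h mul0r.
  have e3 : \sum_i `|w1 i| = 1.
    rewrite (bigD1 k) //= big1 => [|i /negbTE h]; first by rewrite /w1 eqxx normr1 addr0.
    by rewrite /w1 h normr0.
  rewrite -/N -/S e1 => h.
  have h' : l * ((N - 2) * M + S) <= \sum_i w1 i * y i.
    apply: h.
    - by move=> i; rewrite /w1; case: eqP => [->|_]; rewrite /= ?mulr1n ?mul1r ?mul0r.
    - move=> i j; rewrite /w1; case: eqP => [->|_]; case: eqP => [->|_]; rewrite /= ?mulr1n;
        have := hxl i; have := hxl j; have := hxu i; have := hxu j; rewrite -/M;
        clear; nra.
  apply: le_trans h' _; have := bound w1; rewrite e3 mulr1 //.
have [hcase|hcase] := lerP (c * M) ((N - 2) * M + S).
  by apply: le_trans c1; rewrite ler_pM2l.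
have N2 : 0 < N - 2 by lra.
have Mpos : 0 < M.
  have : 0 < (c + 2) * M by move: Sge hcase N3; clear -c0; nra.
  by rewrite pmulr_rgt0 //; lra.
set tau : R := (c * M + S) / (N - 2).
have htau : (N - 2) * tau = c * M + S by rewrite /tau mulrC divfK //; exact: lt0r_neq0.
have c_le : c < N - 2.
  have : c * (3 * N - 4) < (N - 2) * (3 * N - 4) by rewrite hc; move: N3; clear; nra.
  by rewrite ltr_pM2r //; lra.
have tauM : tau < M.
  have : (N - 2) * tau < (N - 2) * M by rewrite htau; move: hcase c_le Mpos; clear; nra.
  by rewrite ltr_pM2l.
have Sneg : S < 0 by move: hcase c_le Mpos; clear; nra.
set th : R := if tau < 0 then 0 else tau.
have th0 : 0 <= th by rewrite /th; case: (ltrP tau 0) => h //; lra.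
have thtau : tau <= th by rewrite /th; case: (ltrP tau 0) => h //; lra.
have thpos : 0 < th -> th = tau by rewrite /th; case: (ltrP tau 0) => h //; rewrite ltxx.
have thM : th < M by rewrite /th; case: (ltrP tau 0) => h //.
pose w i : R := wfun th (x i).
have wx : forall i, 0 <= w i * x i by move=> i; exact: wfun_x.
have wxx : forall i j, 0 <= (w i + w j) * (x i + x j) by move=> i j; exact: wfun_pair.
have C2 := @cert R n A l x w sym dd pos lA wx wxx.
rewrite -/N -/S in C2.
have B2 := bound w.
have wk : w k = 1 by rewrite /w /wfun -/M thM.
have sw : 1 <= \sum_i `|w i|.
  rewrite (bigD1 k) //= wk normr1 lerDl.
  by apply: sumr_ge0 => i _; exact: normr_ge0.
suff K2 : c * M * \sum_i `|w i| <= \sum_i w i * ((N - 2) * x i + S).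
  have : l * (c * M) * \sum_i `|w i| <= Y * \sum_i `|w i|.
    apply: le_trans B2; apply: le_trans C2; rewrite -mulrA ler_pM2l //.
  by rewrite ler_pM2r //; apply: lt_le_trans sw.
pose P1 i : R := if th < x i then 1 else 0.
pose Q1 i : R := if x i < 0 then 1 else 0.
pose Xi i : R := if th < x i then x i else 0.
pose Ni i : R := if x i < 0 then - x i else 0.
set p := \sum_i P1 i; set Q := \sum_i Q1 i; set X := \sum_i Xi i; set Ns := \sum_i Ni i.
have per : forall i, (N - 2) * (Xi i - P1 i * tau) + 2 * S * P1 i + (N - 2) * (Ni i - Q1 i * tau)
   <= w i * ((N - 2) * x i + S) - c * M * `|w i|.
  by move=> i; exact: per_elem.
have sumE : \sum_i ((N - 2) * (Xi i - P1 i * tau) + 2 * S * P1 i + (N - 2) * (Ni i - Q1 i * tau))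
   = (N - 2) * (X - p * tau) + 2 * S * p + (N - 2) * (Ns - Q * tau).
  by rewrite !big_split /= -!mulr_sumr !sumrB -!mulr_suml.
have hXS : X - S <= Ns.
  rewrite /X /S /Ns -sumrB; apply: ler_sum => i _; exact: elem_XS.
have hNQ : Ns <= Q * M.
  rewrite /Ns /Q mulr_suml; apply: ler_sum => i _; exact: elem_NQ.
have hXp : M - tau <= X - p * tau.
  rewrite /X /p mulr_suml -sumrB (bigD1 k) //= {1}/Xi {1}/P1 -/M thM mul1r lerDl.
  by apply: sumr_ge0 => i _; exact: elem_Xp.
have hp1 : 1 <= p.
  rewrite /p (bigD1 k) //= {1}/P1 -/M thM lerDl.
  by apply: sumr_ge0 => i _; exact: elem_01.
have hXM : M <= X.
  rewrite /X (bigD1 k) //= {1}/Xi -/M thM lerDl.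
  by apply: sumr_ge0 => i _; exact: elem_X0.
have hQ1 : 1 <= Q.
  have QE : Q = (\sum_i nat_of_bool (x i < 0)%R)%:R.
    by rewrite natr_sum; apply: eq_bigr => i _; rewrite /Q1; case: (x i < 0).
  have : 0 < Q * M.
    apply: lt_le_trans hNQ; apply: lt_le_trans hXS.
    by move: hXM Sneg Mpos; clear; lra.
  rewrite pmulr_lgt0 // QE ltr0n => h; by rewrite ler1n.
have hpQ : p + Q <= N.
  have -> : N = \sum_(i < n) (1 : R) by rewrite sumr_const card_ord.
  rewrite /p /Q -big_split; apply: ler_sum => i _; exact: elem_pQ.
have hcase' : S < (c - (N - 2)) * M by move: hcase; clear; lra.
have AC := @arith_core R N M tau S X Ns p Q c N3 Mpos hc htau hcase' hXS hNQ hXp hp1 hQ1 hpQ.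
have : 0 <= \sum_i (w i * ((N - 2) * x i + S) - c * M * `|w i|).
  apply: le_trans AC _.
  rewrite -sumE; apply: ler_sum => i _; exact: per.
by rewrite sumrB -mulr_sumr subr_ge0.
Qed.
Theorem mainTheorem5 (R : realFieldType) (n : nat) (A : 'M[R]_n) :
  (3 <= n)%N ->
  A^T = A ->
  diag_dominant A ->
  (forall i j, 0 < A i j) ->
  cond_inf A <=
    ((2 * max_offdiag A * (n - 1)%:R + max_Delta A) * (3 * n - 4)%:R)
    / (2 * min_entry A * (n - 2)%:R * (n - 1)%:R).
Proof.
move=> n3 sym dd pos.
have n0 : (0 < n)%N by apply: leq_trans n3.
pose i0 : 'I_n := Ordinal n0.
set N : R := n%:R.
have N3 : 3 <= N by rewrite /N (ler_nat R 3 n).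
set c : R := (2 * (N - 2) * (N - 1)) / (3 * N - 4).
have K0 : 0 < 3 * N - 4 by lra.
have hc : c * (3 * N - 4) = 2 * (N - 2) * (N - 1).
  by rewrite /c divfK //; exact: lt0r_neq0.
have c0 : 0 < c.
  have : 0 < c * (3 * N - 4) by rewrite hc; nra.
  by rewrite pmulr_lgt0.
set l := min_entry A.
have lA : forall i j, l <= A i j.
  move=> i j; rewrite /l /min_entry; apply: (bigmin_inf i) => //; exact: bigmin_le.
have l0 : 0 < l.
  rewrite /l /min_entry; apply/bigmin_gtP; split.
    apply: lt_le_trans (pos i0 i0) _; rewrite /max_entry.
    apply: (bigmax_sup i0) => //; exact: le_bigmax.
  move=> i _; apply/bigmin_gtP; split => // .
  apply: lt_le_trans (pos i0 i0) _; rewrite /max_entry.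
  apply: (bigmax_sup i0) => //; exact: le_bigmax.
have hK : forall (x : 'I_n -> R) Y, (forall i, `|\sum_j A i j * x j| <= Y) ->
    forall j, l * (c * `|x j|) <= Y.
  move=> x Y hy j.
  have [i1 _ hi1] := @eq_bigmax _ _ _ 0 i0 predT (fun i => `|x i|) isT (fun i _ => normr_ge0 (x i)).
  have hle : forall j, `|x j| <= `|x i1|.
    by move=> j'; rewrite -hi1; exact: le_bigmax.
  have lc0 : 0 <= l * c by apply: mulr_ge0; apply: ltW.
  case: (lerP 0 (x i1)) => hs.
    have := @key R n A l x i1 Y n3 sym dd pos lA l0 hy.
    rewrite -/N -/c => h.
    have h2 : l * (c * x i1) <= Y by apply: h => j'; rewrite -(ger0_norm hs); exact: hle.
    apply: le_trans h2; rewrite mulrA [X in _ <= X]mulrA; apply: ler_wpM2l => //.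
    by rewrite -(ger0_norm hs); exact: hle.
  have hy' : forall i, `|\sum_j A i j * (- x j)| <= Y.
    by move=> i; under eq_bigr do rewrite mulrN; rewrite sumrN normrN.
  have := @key R n A l (fun j => - x j) i1 Y n3 sym dd pos lA l0 hy'.
  rewrite -/N -/c => h.
  have h2 : l * (c * - x i1) <= Y by apply: h => j' /=; rewrite normrN -(ltr0_norm hs); exact: hle.
  apply: le_trans h2; rewrite mulrA [X in _ <= X]mulrA; apply: ler_wpM2l => //.
  by rewrite -(ltr0_norm hs); exact: hle.
have Asym : forall i j, A j i = A i j by move=> i j; rewrite -{1}sym mxE.
have lc0 : 0 < l * c by apply: mulr_gt0.
have unitA : A \in unitmx.
  rewrite -row_free_unit -kermx_eq0; apply/eqP/matrixP => r j.
  have hz : forall i, `|\sum_j A i j * kermx A r j| <= 0.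
    move=> i; have : (kermx A *m A) r i = 0 by rewrite mulmx_ker mxE.
    rewrite mxE => e.
    rewrite (eq_bigr (fun j => kermx A r j * A j i)); last by move=> j' _; rewrite mulrC Asym.
    by rewrite e normr0.
  have := hK _ _ hz j; rewrite mulrA => h.
  have : `|kermx A r j| <= 0 by rewrite -(pmulr_rle0 _ lc0).
  by rewrite normr_le0 => /eqP ->; rewrite mxE.
set B := invmx A.
have invB : inf_norm B <= (l * c)^-1.
  rewrite /inf_norm; apply: bigmax_le; first by rewrite invr_ge0 ltW.
  move=> i _.
  pose x r := \sum_j B r j * Num.sg (B i j).
  have hy : forall q, `|\sum_r A q r * x r| <= 1.
    move=> q.
    have -> : \sum_r A q r * x r = \sum_j (A *m B) q j * Num.sg (B i j).
      rewrite /x; under eq_bigr do rewrite mulr_sumr.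
      rewrite exchange_big /=; apply: eq_bigr => j _; rewrite mxE mulr_suml.
      by apply: eq_bigr => r _; rewrite mulrA.
    rewrite mulmxV // (bigD1 q) //= big1 => [|j /negbTE h]; last by rewrite mxE eq_sym h mulr0n mul0r.
    rewrite mxE eqxx mulr1n mul1r addr0 normr_sg; by case: (B i q != 0).
  have := hK x 1 hy i; rewrite mulrA => h.
  have hx : x i = \sum_j `|B i j| by apply: eq_bigr => j _; rewrite normrEsg mulrC.
  rewrite -hx; apply: le_trans (ler_norm _) _.
  by rewrite -(ler_pM2l lc0) mulfV ?lt0r_neq0.
set m := max_offdiag A; set dl := max_Delta A.
have m0 : 0 <= m by rewrite /m /max_offdiag; exact: bigmax_ge_id.
have dl0 : 0 <= dl by rewrite /dl /max_Delta; exact: bigmax_ge_id.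
have Am : forall i j, j != i -> A i j <= m.
  move=> i j hij; rewrite /m /max_offdiag.
  apply: (bigmax_sup i) => //; exact: (bigmax_sup j).
have Dl : forall i, Delta A i <= dl by move=> i; rewrite /dl /max_Delta; exact: (bigmax_sup i).
have normA : inf_norm A <= 2 * m * (N - 1) + dl.
  rewrite /inf_norm; apply: bigmax_le; first by apply: addr_ge0 => //; apply: mulr_ge0; [apply: mulr_ge0|]; lra.
  move=> i _.
  have e1 : \sum_j `|A i j| = Delta A i + 2 * \sum_(j < n | j != i) `|A i j|.
    by rewrite (bigD1 i) //= /Delta; ring.
  have e2 : \sum_(j < n | j != i) `|A i j| <= m * (N - 1).
    have -> : m * (N - 1) = \sum_(j < n | j != i) m.
      have : \sum_(j < n) m = m + \sum_(j < n | j != i) m by rewrite (bigD1 i).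
      rewrite sumr_const card_ord -mulr_natl -/N => h.
      have -> : \sum_(j < n | j != i) m = N * m - m by rewrite h; ring.
      ring.
    apply: ler_sum => j hj; rewrite ger0_norm; [exact: Am|exact: ltW].
  rewrite e1; have := Dl i; lra.
have nA0 : 0 <= inf_norm A by rewrite /inf_norm; exact: bigmax_ge_id.
have nB0 : 0 <= inf_norm B by rewrite /inf_norm; exact: bigmax_ge_id.
have e1 : (n - 1)%:R = N - 1 by rewrite natrB ?(leq_trans _ n3).
have e2 : (n - 2)%:R = N - 2 by rewrite natrB ?(leq_trans _ n3).
have e3 : (3 * n - 4)%:R = 3 * N - 4.
  by rewrite natrB ?natrM //; apply: (@leq_trans (3 * 3)) => //; rewrite leq_mul2l.
rewrite e1 e2 e3 /cond_inf -/B.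
apply: le_trans (ler_pM nA0 nB0 normA invB) _.
rewrite le_eqVlt; apply/orP; left; apply/eqP.
rewrite /c; field.
rewrite -/N; apply/and4P; split; apply: lt0r_neq0 => //; lra.
Qed.
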